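(* Let $P,\sigma_1^2,\sigma_2^2,\sigma_e^2>0$, let $h_1,h_2$ satisfy $0<|h_1|^2\le|h_2|^2$, set $\rho_1=P/\sigma_1^2$, $\rho_2=P/\sigma_2^2$, $\rho_e=P/\sigma_e^2$, and let $Q_1>0$ and $0<\varepsilon<1$. For $\phi_1,\phi_2\in(0,1]$ and $R_E\ge0$ define $$C_1=\log_2\Big(1+\frac{\phi_1\rho_1|h_1|^2}{\phi_2\rho_1|h_1|^2+1}\Big),\qquad R_2^s(\phi_2,R_E)=\big[\log_2(1+\phi_2\rho_2|h_2|^2)-R_E\big]^+,$$ with $[x]^+=\max(x,0)$, and the high-MER asymptotic secrecy outage probability $$P_{out}^{\infty}(R_E,\phi_2)=\begin{cases}\exp\!\Big(-\frac{2^{R_E}-1}{\rho_e(\phi_2-\phi_1(2^{R_E}-1))}\Big), & 2^{R_E}-1<\frac{\phi_2}{\phi_1},\\ 0, & 2^{R_E}-1\ge\frac{\phi_2}{\phi_1}.\end{cases}$$ Consider the problem $\max_{R_E,\phi_1,\phi_2}R_2^s(\phi_2,R_E)$ subject to $C_1\ge Q_1$, $P_{out}^{\infty}(R_E,\phi_2)\le\varepsilon$ and $\phi_1+\phi_2=1$ (the problem \textbf{P1} in the regime $\rho_1/\rho_e\to\infty$). Then the feasibility condition of this problem is $$P>\max\Big(\frac{2^{Q_1}-1}{|h_1|^2}\sigma_1^2,\ \frac{\sigma_2^2}{|h_2|^2}-\frac{\sigma_e^2}{\ln(1/\varepsilon)}\Big),$$ and under this condition the optimal power allocation and redundancy rate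 are $$\phi_2^*=\min\Big(\frac{1}{2^{Q_1}}+\frac{\sigma_1^2}{P|h_1|^22^{Q_1}}-\frac{\sigma_1^2}{P|h_1|^2},\ \frac12+\frac{\sigma_e^2}{2P\ln(1/\varepsilon)}-\frac{\sigma_2^2}{2P|h_2|^2}\Big),$$ $$\phi_1^*=1-\phi_2^*,\qquad R_E^*=\log_2\Big(1+\frac{\phi_2^*P\ln(1/\varepsilon)}{\sigma_e^2+\phi_1^*P\ln(1/\varepsilon)}\Big).$$
   Context: Two-user downlink NOMA with a passive eavesdropper: $\phi_k$ is the fraction of transmit power to user $k$, $C_1$ is the rate of the weak user 1 (required to be at least $Q_1$), $R_2^s$ is the secrecy rate of the strong user 2 with redundancy rate $R_E$, and $P^{\infty}_{out}$ is the limit of user 2's secrecy outage probability as the main-to-eavesdropper ratio $\rho_1/\rho_e=\sigma_e^2/\sigma_1^2\to\infty$; $\varepsilon$ is the maximum allowable secrecy outage probability. *)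

(* Defs.v *)
From Stdlib Require Import Reals.
From Coquelicot Require Import Coquelicot.
Open Scope R_scope.

Definition log2 (x : R) : R := ln x / ln 2.

Definition posp (x : R) : R := Rmax x 0.

Definition C1 (rho1 g1 phi1 phi2 : R) : R :=
  log2 (1 + phi1 * rho1 * g1 / (phi2 * rho1 * g1 + 1)).

Definition R2s (rho2 g2 phi2 RE : R) : R :=
  posp (log2 (1 + phi2 * rho2 * g2) - RE).

Definition Pout_inf (rhoe phi1 phi2 RE : R) : R :=
  if Rlt_dec (Rpower 2 RE - 1) (phi2 / phi1)
  then exp (- ((Rpower 2 RE - 1) / (rhoe * (phi2 - phi1 * (Rpower 2 RE - 1)))))
  else 0.

Definition P1_feasible (rho1 rhoe g1 Q1 eps RE phi1 phi2 : R) : Prop :=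
  0 < phi1 <= 1 /\ 0 < phi2 <= 1 /\ 0 <= RE /\
  C1 rho1 g1 phi1 phi2 >= Q1 /\
  Pout_inf rhoe phi1 phi2 RE <= eps /\
  phi1 + phi2 = 1.

(* Main.v *)
Require Import Defs.
From Stdlib Require Import Reals Lra.
From Coquelicot Require Import Coquelicot.
Open Scope R_scope.

Lemma le_div_iff a N D : 0 < D -> (a <= N / D <-> a * D <= N).
Proof.
  intros HD; split; intro H.
  - replace N with (N / D * D) by (field; lra). apply Rmult_le_compat_r; lra.
  - replace a with (a * D * / D) by (field; lra). unfold Rdiv.
    apply Rmult_le_compat_r; [apply Rlt_le, Rinv_0_lt_compat; lra | lra].
Qed.

Lemma lt_div_iff a N D : 0 < D -> (a < N / D <-> a * D < N).
Proof.
  intros HD; split; intro H.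
  - replace N with (N / D * D) by (field; lra). apply Rmult_lt_compat_r; lra.
  - replace a with (a * D * / D) by (field; lra). unfold Rdiv.
    apply Rmult_lt_compat_r; [apply Rinv_0_lt_compat; lra | lra].
Qed.

Lemma ln2_pos : 0 < ln 2.
Proof. rewrite <- ln_1. apply ln_increasing; lra. Qed.

Lemma log2_lt x y : 0 < x -> x < y -> log2 x < log2 y.
Proof.
  intros. unfold log2, Rdiv. apply Rmult_lt_compat_r.
  apply Rinv_0_lt_compat, ln2_pos. apply ln_increasing; lra.
Qed.

Lemma log2_le x y : 0 < x -> x <= y -> log2 x <= log2 y.
Proof. intros H1 [H2|H2]. apply Rlt_le, log2_lt; lra. subst; lra. Qed.

Lemma log2_lt_inv x y : 0 < x -> 0 < y -> log2 x < log2 y -> x < y.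
Proof.
  intros Hx Hy H. destruct (Rlt_or_le x y) as [h|h]; auto.
  apply log2_le in h; lra.
Qed.

Lemma log2_Rpower z : log2 (Rpower 2 z) = z.
Proof. unfold log2. rewrite ln_Rpower. field. apply Rgt_not_eq, ln2_pos. Qed.

Lemma Rpower_log2 y : 0 < y -> Rpower 2 (log2 y) = y.
Proof.
  intros. unfold Rpower, log2. replace (ln y / ln 2 * ln 2) with (ln y).
  apply exp_ln; auto. field. apply Rgt_not_eq, ln2_pos.
Qed.

Lemma Rpower2_pos z : 0 < Rpower 2 z.
Proof. unfold Rpower. apply exp_pos. Qed.

Lemma log2_ge_iff y Q : 0 < y -> (log2 y >= Q <-> y >= Rpower 2 Q).
Proof.
  intros Hy; split; intro H.
  - destruct (Rlt_or_le y (Rpower 2 Q)) as [h|h]; [|lra].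
    apply log2_lt in h; auto. rewrite log2_Rpower in h. lra.
  - rewrite <- (log2_Rpower Q). apply Rle_ge, log2_le; [apply Rpower2_pos|lra].
Qed.

Lemma log2_1 : log2 1 = 0.
Proof. unfold log2. rewrite ln_1. unfold Rdiv. ring. Qed.

Lemma log2_diff_le a b c d : 0 < a -> 0 < b -> 0 < c -> 0 < d ->
  a * d <= c * b -> log2 a - log2 b <= log2 c - log2 d.
Proof.
  intros. assert (H' := log2_le (a*d) (c*b)).
  unfold log2 in *. rewrite !ln_mult in H' by auto.
  assert (0 < ln 2) by apply ln2_pos.
  assert (Hq: (ln a + ln d) / ln 2 <= (ln c + ln b) / ln 2) by (apply H'; nra).
  unfold Rdiv in *. nra.
Qed.

Lemma C1_iff (P s1 g1 Q1 p : R) : 0 < P -> 0 < s1 -> 0 < g1 -> 0 <= p ->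
  (Defs.C1 (P / s1) g1 (1 - p) p >= Q1 <-> Rpower 2 Q1 * (p * P * g1 + s1) <= P * g1 + s1).
Proof.
  intros HP Hs Hg Hp. unfold Defs.C1.
  assert (0 <= p * P * g1) by (apply Rmult_le_pos; [apply Rmult_le_pos|]; lra).
  assert (0 <= p * (P / s1) * g1).
  { apply Rmult_le_pos; [apply Rmult_le_pos|]; try lra. apply Rlt_le, Rdiv_lt_0_compat; lra. }
  replace (1 + (1 - p) * (P / s1) * g1 / (p * (P / s1) * g1 + 1))
    with ((P * g1 + s1) / (p * P * g1 + s1)) by (field; lra).
  rewrite log2_ge_iff.
  - split; intro H1. apply Rge_le in H1. apply le_div_iff in H1; lra.
      apply Rle_ge, le_div_iff; lra.
  - apply Rdiv_lt_0_compat; nra.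
Qed.

Lemma pout_imp (se P L eps p1 p2 RE : R) : 0 < se -> 0 < P -> 0 < L -> eps = exp (- L) ->
  0 < p1 -> 0 < p2 -> 0 <= RE ->
  Pout_inf (P / se) p1 p2 RE <= eps ->
  p2 * P * L <= (Rpower 2 RE - 1) * (se + p1 * P * L).
Proof.
  intros Hse HP HL He H1 H2 HRE. unfold Pout_inf.
  set (t := Rpower 2 RE - 1).
  assert (Ht : 0 <= t).
  { unfold t. assert (1 <= Rpower 2 RE). rewrite <- (Rpower_O 2) by lra.
    apply Rle_Rpower; lra. lra. }
  destruct (Rlt_dec t (p2 / p1)) as [h|h]; intro H.
  - apply lt_div_iff in h; auto.
    set (d := P / se * (p2 - p1 * t)). fold d in H.
    assert (Hd : 0 < d). { unfold d. apply Rmult_lt_0_compat. apply Rdiv_lt_0_compat; lra. nra. }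
    assert (HL2 : L <= t / d).
    { destruct (Rlt_or_le (t / d) L) as [h2|h2]; auto.
      assert (exp (- L) < exp (- (t / d))) by (apply exp_increasing; lra). lra. }
    apply le_div_iff in HL2; auto. unfold d in HL2.
    replace (L * (P / se * (p2 - p1 * t))) with ((L * P * (p2 - p1 * t)) / se) in HL2 by (field; lra).
    assert (HH: L * P * (p2 - p1 * t) <= t * se).
    { replace (L * P * (p2 - p1 * t)) with ((L * P * (p2 - p1 * t)) / se * se) by (field; lra).
      apply Rmult_le_compat_r; lra. }
    lra.
  - apply Rnot_lt_le in h.
    assert (h3 : p2 <= t * p1).
    { replace p2 with (p2 / p1 * p1) at 1 by (field; lra). apply Rmult_le_compat_r; lra. }
    assert (0 < P * L) by nra.
    assert (p2 * (P * L) <= t * p1 * (P * L)) by (apply Rmult_le_compat_r; lra).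
    assert (0 <= t * se) by nra. lra.
Qed.

Lemma pout_opt (se P L eps p1 p2 : R) : 0 < se -> 0 < P -> 0 < L -> eps = exp (- L) ->
  0 < p1 -> 0 < p2 -> 
  Pout_inf (P / se) p1 p2 (log2 (1 + p2 * P * L / (se + p1 * P * L))) <= eps.
Proof.
  intros Hse HP HL He H1 H2.
  assert (HD : 0 < se + p1 * P * L) by (assert (0 < p1 * P * L) by (apply Rmult_lt_0_compat; nra); lra).
  assert (HT : 0 < p2 * P * L / (se + p1 * P * L)).
  { apply Rdiv_lt_0_compat; auto. apply Rmult_lt_0_compat; nra. }
  unfold Pout_inf. rewrite Rpower_log2 by lra.
  replace (1 + p2 * P * L / (se + p1 * P * L) - 1) with (p2 * P * L / (se + p1 * P * L)) by ring.
  destruct (Rlt_dec _ _) as [h|h].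
  - replace (p2 * P * L / (se + p1 * P * L) /
           (P / se * (p2 - p1 * (p2 * P * L / (se + p1 * P * L))))) with L.
    + rewrite He; lra.
    + field. repeat split; try lra. 
      replace (p2 * (se + p1 * P * L) - p1 * (p2 * P * L)) with (p2 * se) by ring. nra.
  - rewrite He. apply Rlt_le, exp_pos.
Qed.

Lemma obj_cmp (P se s2 g2 L p ps B : R) : 0 < P -> 0 < se -> 0 < s2 -> 0 < g2 -> 0 < L ->
  0 < p < 1 -> 0 < ps < 1 ->
  B = 1 / 2 + se / (2 * P * L) - s2 / (2 * P * g2) ->
  0 <= (ps - p) * (2 * B - ps - p) ->
  log2 (1 + p * (P / s2) * g2) - log2 (1 + p * P * L / (se + (1 - p) * P * L))
  <= log2 (1 + ps * (P / s2) * g2) - log2 (1 + ps * P * L / (se + (1 - ps) * P * L)).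
Proof.
  intros HP Hse Hs2 Hg2 HL Hp Hps HB Hsign.
  set (y := P / s2 * g2). set (M := P * L). set (K := se + M).
  assert (Hy : 0 < y) by (unfold y; apply Rmult_lt_0_compat; [apply Rdiv_lt_0_compat|]; lra).
  assert (HM : 0 < M) by (unfold M; nra).
  assert (HDp : 0 < se + (1 - p) * P * L) by (assert (0 < (1-p)*P*L) by (apply Rmult_lt_0_compat; nra); lra).
  assert (HDps : 0 < se + (1 - ps) * P * L) by (assert (0 < (1-ps)*P*L) by (apply Rmult_lt_0_compat; nra); lra).
  assert (E1 : 1 + p * P * L / (se + (1 - p) * P * L) = K / (se + (1 - p) * P * L)) by (unfold K, M; field; lra).
  assert (E2 : 1 + ps * P * L / (se + (1 - ps) * P * L) = K / (se + (1 - ps) * P * L)) by (unfold K, M; field; lra).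
  assert (Hpy : p * (P / s2) * g2 = p * y) by (unfold y; ring).
  assert (Hpsy : ps * (P / s2) * g2 = ps * y) by (unfold y; ring).
  rewrite E1, E2, Hpy, Hpsy.
  assert (HK : 0 < K) by (unfold K; lra).
  assert (HBy : 2 * B * y * M = y * K - M).
  { rewrite HB; unfold y, K, M. field. lra. }
  assert (key : (1 + p * y) * (se + (1 - p) * P * L) <= (1 + ps * y) * (se + (1 - ps) * P * L)).
  { assert (Eq : (1 + ps * y) * (se + (1 - ps) * P * L) - (1 + p * y) * (se + (1 - p) * P * L)
             = (y * M) * ((ps - p) * (2 * B - ps - p))).
    { replace (y * M * ((ps - p) * (2 * B - ps - p))) with ((ps - p) * (2 * B * y * M) - (ps - p) * (ps + p) * y * M) by ring.
      rewrite HBy. unfold K, M. ring. }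
    assert (0 <= y * M * ((ps - p) * (2 * B - ps - p))) by (apply Rmult_le_pos; nra). lra. }
  apply log2_diff_le; try nra; try (apply Rdiv_lt_0_compat; lra).
  replace ((1 + p * y) * (K / (se + (1 - ps) * P * L))) with
     (((1 + p * y) * (se + (1 - p) * P * L)) * (K / ((se + (1 - p) * P * L) * (se + (1 - ps) * P * L)))) by (field; lra).
  replace ((1 + ps * y) * (K / (se + (1 - p) * P * L))) with
     (((1 + ps * y) * (se + (1 - ps) * P * L)) * (K / ((se + (1 - p) * P * L) * (se + (1 - ps) * P * L)))) by (field; lra).
  apply Rmult_le_compat_r; auto. apply Rlt_le, Rdiv_lt_0_compat; nra.
Qed.

Lemma posp_le x y : x <= y -> posp x <= posp y.
Proof. unfold posp, Rmax. intros. destruct (Rle_dec x 0); destruct (Rle_dec y 0); lra. Qed.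

Lemma posp_pos x : 0 < posp x <-> 0 < x.
Proof. unfold posp, Rmax. destruct (Rle_dec x 0); lra. Qed.

Lemma div_lt_iff N D a : 0 < D -> (N / D < a <-> N < a * D).
Proof.
  intros HD; split; intro H.
  - replace N with (N / D * D) by (field; lra). apply Rmult_lt_compat_r; lra.
  - replace a with (a * D * / D) by (field; lra). unfold Rdiv.
    apply Rmult_lt_compat_r; [apply Rinv_0_lt_compat; lra | lra].
Qed.

Theorem theorem2
  (P s1 s2 se : R) (h1 h2 : C) (Q1 eps : R)
  (HP : 0 < P) (Hs1 : 0 < s1) (Hs2 : 0 < s2) (Hse : 0 < se)
  (Hh1 : 0 < Cmod h1 ^ 2) (Hh12 : Cmod h1 ^ 2 <= Cmod h2 ^ 2)
  (HQ1 : 0 < Q1) (Heps0 : 0 < eps) (Heps1 : eps < 1) :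
  let g1 := Cmod h1 ^ 2 in
  let g2 := Cmod h2 ^ 2 in
  let rho1 := P / s1 in
  let rho2 := P / s2 in
  let rhoe := P / se in
  let L := ln (1 / eps) in
  let phi2s := Rmin (1 / Rpower 2 Q1 + s1 / (P * g1 * Rpower 2 Q1) - s1 / (P * g1))
                    (1 / 2 + se / (2 * P * L) - s2 / (2 * P * g2)) in
  let phi1s := 1 - phi2s in
  let REs := log2 (1 + phi2s * P * L / (se + phi1s * P * L)) in
  ((exists RE phi1 phi2,
       P1_feasible rho1 rhoe g1 Q1 eps RE phi1 phi2 /\ 0 < R2s rho2 g2 phi2 RE)
     <-> P > Rmax ((Rpower 2 Q1 - 1) / g1 * s1) (s2 / g2 - se / L)) /\
  (P > Rmax ((Rpower 2 Q1 - 1) / g1 * s1) (s2 / g2 - se / L) ->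
     P1_feasible rho1 rhoe g1 Q1 eps REs phi1s phi2s /\
     forall RE phi1 phi2,
       P1_feasible rho1 rhoe g1 Q1 eps RE phi1 phi2 ->
       R2s rho2 g2 phi2 RE <= R2s rho2 g2 phi2s REs).
Proof.
  intros g1 g2 rho1 rho2 rhoe L phi2s phi1s REs.
  assert (Eg1 : g1 = Cmod h1 ^ 2) by reflexivity. clearbody g1.
  assert (Eg2 : g2 = Cmod h2 ^ 2) by reflexivity. clearbody g2.
  assert (EL : L = ln (1 / eps)) by reflexivity. clearbody L.
  assert (Erho1 : rho1 = P / s1) by reflexivity. clearbody rho1.
  assert (Erho2 : rho2 = P / s2) by reflexivity. clearbody rho2.
  assert (Erhoe : rhoe = P / se) by reflexivity. clearbody rhoe.
  set (a := Rpower 2 Q1) in *.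
  set (A := 1 / a + s1 / (P * g1 * a) - s1 / (P * g1)) in *.
  set (B := 1 / 2 + se / (2 * P * L) - s2 / (2 * P * g2)) in *.
  assert (EB : B = 1 / 2 + se / (2 * P * L) - s2 / (2 * P * g2)) by reflexivity.
  assert (EA : A = 1 / a + s1 / (P * g1 * a) - s1 / (P * g1)) by reflexivity.
  clearbody B A.
  assert (Ephi2s : phi2s = Rmin A B) by reflexivity. clearbody phi2s.
  assert (Ephi1s : phi1s = 1 - phi2s) by reflexivity. clearbody phi1s.
  assert (EREs : REs = log2 (1 + phi2s * P * L / (se + phi1s * P * L))) by reflexivity.
  clearbody REs.
  subst rho1 rho2 rhoe phi1s REs.
  assert (Ha : 1 < a).
  { unfold a. rewrite <- (Rpower_O 2) by lra. apply Rpower_lt; lra. }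
  assert (Hg1 : 0 < g1) by lra. assert (Hg2 : 0 < g2) by lra.
  assert (HL : 0 < L).
  { rewrite EL, <- ln_1. apply ln_increasing; [lra|].
    apply lt_div_iff; lra. }
  assert (He : eps = exp (- L)).
  { rewrite EL. replace (1 / eps) with (/ eps) by (field; lra).
    rewrite ln_Rinv by lra. rewrite Ropp_involutive, exp_ln; lra. }
  assert (HX : 0 < P * g1 * a) by (apply Rmult_lt_0_compat; nra).
  assert (HAid : A * (P * g1 * a) = P * g1 + s1 - a * s1) by (rewrite EA; field; lra).
  assert (HA1 : A < 1).
  { destruct (Rlt_or_le A 1) as [h|h]; auto.
    assert (1 * (P * g1 * a) <= A * (P * g1 * a)) by (apply Rmult_le_compat_r; lra).
    assert (0 < (a-1)*(P*g1)) by (apply Rmult_lt_0_compat; nra). assert (0 < (a-1)*s1) by nra. lra. }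
  assert (HBid : B * (2 * P * L * g2) = P * L * g2 + se * g2 - s2 * L) by (rewrite EB; field; lra).
  assert (HY : 0 < 2 * P * L * g2) by (assert (0 < P * L) by nra; nra).
  assert (HC1 : forall p, 0 <= p -> (Defs.C1 (P / s1) g1 (1 - p) p >= Q1 <-> p <= A)).
  { intros p Hp. rewrite C1_iff by lra. fold a. split; intro H.
    - apply (Rmult_le_reg_r (P * g1 * a)); auto. lra.
    - assert (p * (P * g1 * a) <= A * (P * g1 * a)) by (apply Rmult_le_compat_r; lra). lra. }
  assert (HcondA : P > (a - 1) / g1 * s1 <-> 0 < A).
  { replace ((a - 1) / g1 * s1) with ((a - 1) * s1 / g1) by (field; lra).
    split; intro H.
    - apply Rgt_lt, div_lt_iff in H; auto.
      apply (Rmult_lt_reg_r (P * g1 * a)); auto. lra.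
    - apply Rlt_gt, div_lt_iff; auto.
      assert (0 * (P * g1 * a) < A * (P * g1 * a)) by (apply Rmult_lt_compat_r; lra). lra. }
  assert (HcondB : P > s2 / g2 - se / L <-> 0 < B).
  { replace (s2 / g2 - se / L) with ((s2 * L - se * g2) / (g2 * L)) by (field; lra).
    assert (Hg2L : 0 < g2 * L) by nra.
    split; intro H.
    - apply Rgt_lt, div_lt_iff in H; auto.
      apply (Rmult_lt_reg_r (2 * P * L * g2)); auto. lra.
    - apply Rlt_gt, div_lt_iff; auto.
      assert (0 * (2 * P * L * g2) < B * (2 * P * L * g2)) by (apply Rmult_lt_compat_r; lra). lra. }
  assert (HBy : 2 * B * (P / s2 * g2) * (P * L) = (P / s2 * g2) * (se + P * L) - P * L)
    by (rewrite EB; field; lra).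
  assert (Hy : 0 < P / s2 * g2) by (apply Rmult_lt_0_compat; [apply Rdiv_lt_0_compat|]; lra).
  assert (HM : 0 < P * L) by nra.
  assert (Hopt : 0 < A -> 0 < B ->
    P1_feasible (P / s1) (P / se) g1 Q1 eps
      (log2 (1 + phi2s * P * L / (se + (1 - phi2s) * P * L))) (1 - phi2s) phi2s /\
    0 < R2s (P / s2) g2 phi2s (log2 (1 + phi2s * P * L / (se + (1 - phi2s) * P * L)))).
  { intros HA HB.
    assert (Hp0 : 0 < phi2s) by (rewrite Ephi2s; apply Rmin_glb_lt; auto).
    assert (HpA : phi2s <= A) by (rewrite Ephi2s; apply Rmin_l).
    assert (HpB : phi2s <= B) by (rewrite Ephi2s; apply Rmin_r).
    assert (HD : 0 < se + (1 - phi2s) * P * L) by (assert (0 < (1-phi2s)*P*L) by (apply Rmult_lt_0_compat; nra); lra).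
    assert (HT : 0 < phi2s * P * L / (se + (1 - phi2s) * P * L)).
    { apply Rdiv_lt_0_compat; auto. apply Rmult_lt_0_compat; nra. }
    split.
    - unfold P1_feasible. split; [lra|]. split; [lra|]. split.
      { rewrite <- log2_1. apply log2_le; lra. }
      split. { apply HC1; lra. }
      split. { apply pout_opt; lra. }
      ring.
    - unfold R2s. apply posp_pos. apply Rlt_Rminus. apply log2_lt; [lra|].
      apply Rplus_lt_compat_l.
      apply div_lt_iff; auto.
      assert (Eq : phi2s * (P / s2) * g2 * (se + (1 - phi2s) * P * L) - phi2s * P * L
                 = phi2s * ((P / s2 * g2) * (P * L)) * (2 * B - phi2s)).
      { replace (phi2s * ((P / s2 * g2) * (P * L)) * (2 * B - phi2s))
          with (phi2s * (2 * B * (P / s2 * g2) * (P * L)) - phi2s * phi2s * (P / s2 * g2) * (P * L)) by ring.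
        rewrite HBy. ring. }
      assert (0 < phi2s * ((P / s2 * g2) * (P * L)) * (2 * B - phi2s)).
      { apply Rmult_lt_0_compat; [|lra]. apply Rmult_lt_0_compat; auto. nra. }
      lra. }
  split.
  - split.
    + intros [RE [phi1 [phi2 [[Hp1 [Hp2 [HRE [HC [HPo Hsum]]]]] Hpos]]]].
      assert (Ephi1 : phi1 = 1 - phi2) by lra. subst phi1.
      apply HC1 in HC; [|lra].
      assert (HA : 0 < A) by lra.
      assert (Hpi := pout_imp se P L eps (1 - phi2) phi2 RE Hse HP HL He (proj1 Hp1) (proj1 Hp2) HRE HPo).
      unfold R2s in Hpos. apply (proj1 (posp_pos _)) in Hpos.
      assert (Ht : Rpower 2 RE < 1 + phi2 * (P / s2) * g2).
      { apply log2_lt_inv. apply Rpower2_pos. assert (0 < phi2*(P/s2)*g2) by (rewrite Rmult_assoc; apply Rmult_lt_0_compat; lra). lra. rewrite log2_Rpower. lra. }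
      set (t := Rpower 2 RE - 1) in *.
      set (y := P / s2 * g2) in *.
      assert (Hlt : phi2 * (P * L) < phi2 * y * (se + (1 - phi2) * P * L)).
      { assert (0 < se + (1 - phi2) * P * L) by nra.
        assert (t * (se + (1 - phi2) * P * L) < phi2 * y * (se + (1 - phi2) * P * L))
          by (apply Rmult_lt_compat_r; [lra| unfold t, y; rewrite <- Rmult_assoc; lra]).
        lra. }
      assert (Hlt2 : phi2 * (phi2 * (y * (P * L))) < phi2 * (2 * B * y * (P * L))).
      { rewrite HBy. nra. }
      apply Rmult_lt_reg_l in Hlt2; [|lra].
      assert (0 < B).
      { assert (0 < y * (P * L)) by nra.
        assert (phi2 * (y * (P * L)) < (2 * B) * (y * (P * L))) by lra.
        apply Rmult_lt_reg_r in H0; auto. lra. }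
      apply Rlt_gt, Rmax_lub_lt; [apply HcondA | apply Rgt_lt, HcondB]; auto.
    + intro Hmax. apply Rgt_lt, Rmax_Rlt in Hmax. destruct Hmax as [H1 H2].
      assert (HA : 0 < A) by (apply HcondA; lra).
      assert (HB : 0 < B) by (apply HcondB; lra).
      destruct (Hopt HA HB) as [F Pp].
      exists (log2 (1 + phi2s * P * L / (se + (1 - phi2s) * P * L))), (1 - phi2s), phi2s.
      auto.
  - intro Hmax. apply Rgt_lt, Rmax_Rlt in Hmax. destruct Hmax as [H1 H2].
    assert (HA : 0 < A) by (apply HcondA; lra).
    assert (HB : 0 < B) by (apply HcondB; lra).
    destruct (Hopt HA HB) as [F Pp]. split; auto.
    intros RE phi1 phi2 [Hp1 [Hp2 [HRE [HC [HPo Hsum]]]]].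
    assert (Ephi1 : phi1 = 1 - phi2) by lra. subst phi1.
    apply HC1 in HC; [|lra].
    assert (Hpi := pout_imp se P L eps (1 - phi2) phi2 RE Hse HP HL He (proj1 Hp1) (proj1 Hp2) HRE HPo).
    assert (Hp0 : 0 < phi2s) by (rewrite Ephi2s; apply Rmin_glb_lt; auto).
    assert (HpA : phi2s <= A) by (rewrite Ephi2s; apply Rmin_l).
    assert (HD : 0 < se + (1 - phi2) * P * L) by nra.
    assert (HTle : log2 (1 + phi2 * P * L / (se + (1 - phi2) * P * L)) <= RE).
    { rewrite <- (log2_Rpower RE). apply log2_le.
      - assert (0 <= phi2 * P * L / (se + (1 - phi2) * P * L)).
        { apply Rlt_le, Rdiv_lt_0_compat; auto. apply Rmult_lt_0_compat; nra. } lra.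
      - assert (phi2 * P * L / (se + (1 - phi2) * P * L) <= Rpower 2 RE - 1).
        { unfold Rdiv. apply (Rmult_le_reg_r (se + (1 - phi2) * P * L)); auto.
          rewrite Rmult_assoc, Rinv_l by lra. lra. }
        lra. }
    unfold R2s. apply Rle_trans with (posp (log2 (1 + phi2 * (P / s2) * g2) - log2 (1 + phi2 * P * L / (se + (1 - phi2) * P * L)))).
    { apply posp_le. lra. }
    apply posp_le. apply (obj_cmp P se s2 g2 L phi2 phi2s B); auto; try lra.
    rewrite Ephi2s. apply Rmin_case_strong; intro h.
    + apply Rmult_le_pos; lra.
    + replace ((B - phi2) * (2 * B - B - phi2)) with ((B - phi2) * (B - phi2)) by ring. pose proof (Rle_0_sqr (B - phi2)); unfold Rsqr in *; lra.
Qed.
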